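(* Let $v(0)\in\mathcal N^*$, $v(0)\neq0$, and $T>0$. For $0<\lambda\le1$ let $w^*$ be the solution on $[0,T]$ of $$\dot w^*(t)=\frac{\lambda}{w^*(t)E_0(t+w^*(t))}-1,\qquad w^*(0)=\frac1{m_1(0)}.$$ Then there exist constants $d_1,d_2$ depending only on $v(0)$ and $T$ such that for all $0<\lambda\le1$ and all $t$ with $\frac1{m_1(0)}+d_1\lambda\log(1/\lambda)\le t\le T$, $$\Big|w^*(t)-\frac{\lambda}{E_0(t)}\Big|\le d_2\lambda^2.$$
   Context: $\mathcal N^*$: finitely supported sequences $v=(v_k)_{k\ge1}$ of nonnegative reals; $m_1(0)=\sum_kkv_k(0)$. Critical core: with $U_0(x)=\sum_kv_k(0)(e^{-kx}-1)$, $E_0:(0,\infty)\to(0,\infty)$ is defined by $E_0(-1/U_0'(x))=\frac{(-U_0'(x))^3}{U_0''(x)}$ for $x\in\mathbb R$ ($x\mapsto-1/U_0'(x)$ is a bijection $\mathbb R\to(0,\infty)$). *)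

(* Defs.v *)
From Stdlib Require Import Reals Lra.
From Stdlib Require List.
From Coquelicot Require Import Coquelicot.
Open Scope R_scope.

(* An element v of N^* (finitely supported sequence (v_k)_{k>=1} of nonnegative
   reals) is represented by the list [v_1; v_2; ...; v_n] of its first n terms
   (all later terms are 0). *)
Definition in_Nstar (v : List.list R) : Prop := List.Forall (fun a => 0 <= a) v.

Definition Nstar_nonzero (v : List.list R) : Prop := exists a, List.In a v /\ a <> 0.

(* sum_{k >= k0} v_{k} f(k), where the list starts at index k0 *)
Fixpoint wsum (f : nat -> R) (v : List.list R) (k : nat) : R :=
  match v with
  | List.nil => 0
  | List.cons a v' => a * f k + wsum f v' (S k)
  end.

Definition m1 (v : List.list R) : R := wsum (fun k => INR k) v 1.

Definition U0 (v : List.list R) (x : R) : R :=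
  wsum (fun k => exp (- INR k * x) - 1) v 1.

(* E is the critical core E_0 of v: E(-1/U_0'(x)) = (-U_0'(x))^3 / U_0''(x)
   for every real x (this determines E on (0,oo)). *)
Definition is_critical_core (v : List.list R) (E : R -> R) : Prop :=
  forall x : R,
    E (- / Derive (U0 v) x) = (- Derive (U0 v) x) ^ 3 / Derive_n (U0 v) 2 x.

Definition continuous_on_closed (w : R -> R) (a b : R) : Prop :=
  forall t, a <= t <= b ->
    forall eps, 0 < eps -> exists delta, 0 < delta /\
      forall s, a <= s <= b -> Rabs (s - t) < delta -> Rabs (w s - w t) < eps.

Definition is_wstar_solution (v : List.list R) (E : R -> R) (lam T : R)
  (w : R -> R) : Prop :=
  continuous_on_closed w 0 T /\
  w 0 = / m1 v /\
  (forall t, 0 <= t <= T -> w t <> 0 /\ 0 < t + w t) /\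
  (forall t, 0 < t < T -> is_derive w t (lam / (w t * E (t + w t)) - 1)).

(* Main.v *)
Require Import Defs.
From Stdlib Require Import Reals Lra Lia List Classical.
From Coquelicot Require Import Coquelicot.
Open Scope R_scope.

Lemma wsum_derive (f df : nat -> R -> R) v k0 x :
  (forall k, is_derive (f k) x (df k x)) ->
  is_derive (fun y => wsum (fun k => f k y) v k0) x (wsum (fun k => df k x) v k0).
Proof.
  intros Hd. revert k0. induction v as [|a v IH]; intros k0; simpl.
  - exact (@is_derive_const R_AbsRing R_NormedModule 0 x).
  - apply (is_derive_plus (fun y => a * f k0 y) (fun y => wsum (fun k => f k y) v (S k0))).
    + apply (is_derive_scal (f k0) x a). apply Hd.
    + apply IH.
Qed.

Lemma wsum_ext f g v k0 : (forall k, f k = g k) -> wsum f v k0 = wsum g v k0.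
Proof. intros H; revert k0; induction v; intros k0; simpl; [auto| rewrite H, IHv; auto]. Qed.

Lemma wsum_scal c f v k0 : wsum (fun k => c * f k) v k0 = c * wsum f v k0.
Proof. revert k0; induction v; intros k0; simpl; [ring| rewrite IHv; ring]. Qed.

Lemma wsum_le f g v k0 : List.Forall (fun a => 0 <= a) v ->
  (forall k, (k0 <= k)%nat -> (k < k0 + length v)%nat -> f k <= g k) ->
  wsum f v k0 <= wsum g v k0.
Proof.
  revert k0; induction v as [|a v IH]; intros k0 Hv H; simpl; [lra|].
  inversion Hv; subst.
  assert (f k0 <= g k0) by (apply H; simpl; lia).
  assert (wsum f v (S k0) <= wsum g v (S k0)).
  { apply IH; auto. intros k K1 K2; apply H; simpl in *; lia. }
  nra.
Qed.

Lemma wsum_pos f v k0 : List.Forall (fun a => 0 <= a) v -> (exists a, List.In a v /\ a <> 0) ->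
  (forall k, (k0 <= k)%nat -> (k < k0 + length v)%nat -> 0 < f k) ->
  0 < wsum f v k0.
Proof.
  revert k0; induction v as [|a v IH]; intros k0 Hv [b [Hb Hb0]] H; simpl; [destruct Hb|].
  inversion Hv; subst.
  assert (0 < f k0) by (apply H; simpl; lia).
  assert (0 <= wsum f v (S k0)).
  { replace 0 with (wsum (fun _ => 0) v (S k0)).
    apply wsum_le; auto. intros k K1 K2; apply Rlt_le, H; simpl in *; lia.
    clear - v. generalize (S k0). induction v; intros; simpl; auto. rewrite IHv; ring. }
  destruct Hb as [Hb|Hb].
  - subst. assert (0 < b) by lra. nra.
  - assert (0 < wsum f v (S k0)).
    { apply IH; eauto. intros k K1 K2; apply H; simpl in *; lia. }
    nra.
Qed.

Lemma is_derive_Rmult (f g : R -> R) x df dg : is_derive f x df -> is_derive g x dg ->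
  is_derive (fun y => f y * g y) x (df * g x + f x * dg).
Proof. intros H1 H2. exact (is_derive_mult f g x df dg H1 H2 Rmult_comm). Qed.

Lemma is_derive_Rplus (f g : R -> R) x df dg : is_derive f x df -> is_derive g x dg ->
  is_derive (fun y => f y + g y) x (df + dg).
Proof. intros H1 H2. exact (is_derive_plus f g x df dg H1 H2). Qed.

Lemma is_derive_Rminus (f g : R -> R) x df dg : is_derive f x df -> is_derive g x dg ->
  is_derive (fun y => f y - g y) x (df - dg).
Proof. intros H1 H2. exact (is_derive_minus f g x df dg H1 H2). Qed.

Lemma mono_le (f df : R -> R) a b : a <= b ->
  (forall x, a <= x <= b -> is_derive f x (df x)) ->
  (forall x, a <= x <= b -> 0 <= df x) -> f a <= f b.
Proof.
  intros Hab Hd Hp.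
  destruct (MVT_gen f a b df) as [c [Hc Heq]].
  - intros x Hx. rewrite Rmin_left, Rmax_right in Hx by lra. apply Hd; lra.
  - intros x Hx. rewrite Rmin_left, Rmax_right in Hx by lra.
    apply continuity_pt_filterlim. apply (ex_derive_continuous (K:=R_AbsRing) (V:=R_NormedModule)). eexists; apply Hd; lra.
  - rewrite Rmin_left, Rmax_right in Hc by lra.
    assert (0 <= df c) by (apply Hp; lra). nra.
Qed.

Definition Sj (v : list R) (j : nat) (x : R) : R :=
  wsum (fun k => INR k ^ j * exp (- INR k * x)) v 1.

Lemma Sj_derive v j x : is_derive (Sj v j) x (- Sj v (S j) x).
Proof.
  unfold Sj. rewrite <- (Rmult_1_l (wsum _ v 1)), Ropp_mult_distr_l, <- wsum_scal.
  apply (wsum_derive (fun k y => INR k ^ j * exp (- INR k * y))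
                     (fun k y => -1 * (INR k ^ S j * exp (- INR k * y)))).
  intros k. auto_derive; auto. simpl; ring.
Qed.

Lemma U0_derive v x : is_derive (U0 v) x (- Sj v 1 x).
Proof.
  unfold U0, Sj. rewrite <- (Rmult_1_l (wsum _ v 1)), Ropp_mult_distr_l, <- wsum_scal.
  apply (wsum_derive (fun k y => exp (- INR k * y) - 1)
                     (fun k y => -1 * (INR k ^ 1 * exp (- INR k * y)))).
  intros k. auto_derive; auto. simpl; ring.
Qed.

Lemma U0_D1 v x : Derive (U0 v) x = - Sj v 1 x.
Proof. apply is_derive_unique, U0_derive. Qed.

Lemma U0_D2 v x : Derive_n (U0 v) 2 x = Sj v 2 x.
Proof.
  simpl. rewrite (Derive_ext _ (fun y => - Sj v 1 y)) by (intros; apply U0_D1).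
  apply is_derive_unique.
  replace (Sj v 2 x) with (- - Sj v 2 x) by ring.
  apply (is_derive_opp (Sj v 1)). apply Sj_derive.
Qed.

Definition Nv (v : list R) : R := INR (length v).

Lemma Sj_pos v j x : in_Nstar v -> Nstar_nonzero v -> 0 < Sj v j x.
Proof.
  intros Hv Hn. apply wsum_pos; auto. intros k K1 K2.
  apply Rmult_lt_0_compat; [apply pow_lt|apply exp_pos].
  apply lt_0_INR; lia.
Qed.

Lemma Sj_mono v j x : in_Nstar v -> Sj v j x <= Sj v (S j) x.
Proof.
  intros Hv. apply wsum_le; auto. intros k K1 K2. simpl.
  assert (1 <= INR k) by (apply (le_INR 1); lia).
  assert (0 <= INR k ^ j * exp (- INR k * x)).
  { apply Rmult_le_pos; [apply pow_le; lra| apply Rlt_le, exp_pos]. }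
  nra.
Qed.

Lemma Sj_N v j x : in_Nstar v -> Sj v (S j) x <= Nv v * Sj v j x.
Proof.
  intros Hv. unfold Sj. rewrite <- wsum_scal. apply wsum_le; auto. intros k K1 K2. simpl.
  assert (INR k <= Nv v) by (unfold Nv; apply le_INR; lia).
  assert (0 <= INR k ^ j * exp (- INR k * x)).
  { apply Rmult_le_pos; [apply pow_le, pos_INR| apply Rlt_le, exp_pos]. }
  nra.
Qed.

Lemma Nv_ge1 v : Nstar_nonzero v -> 1 <= Nv v.
Proof.
  intros [a [Ha _]]. unfold Nv. destruct v; [destruct Ha|]. simpl length.
  apply (le_INR 1); lia.
Qed.

Lemma m1_Sj v : m1 v = Sj v 1 0.
Proof. unfold m1, Sj. apply wsum_ext. intros k. rewrite Rmult_0_r, exp_0. ring. Qed.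

Lemma Sj_cont v j : continuity (Sj v j).
Proof.
  intros x. apply continuity_pt_filterlim.
  apply (ex_derive_continuous (K:=R_AbsRing) (V:=R_NormedModule)). eexists; apply Sj_derive.
Qed.

Lemma exp_le x y : x <= y -> exp x <= exp y.
Proof. intros H. destruct (Rle_lt_or_eq_dec _ _ H) as [H1|H1]; [apply Rlt_le, exp_increasing; auto| subst; lra]. Qed.

Lemma S1_neg v x : in_Nstar v -> x <= 0 -> m1 v * exp (- x) <= Sj v 1 x.
Proof.
  intros Hv Hx. rewrite m1_Sj. unfold Sj. rewrite Rmult_comm, <- wsum_scal. apply wsum_le; auto.
  intros k K1 K2. rewrite Rmult_0_r, exp_0.
  assert (1 <= INR k) by (apply (le_INR 1); lia).
  assert (exp (-x) <= exp (- INR k * x)) by (apply exp_le; nra).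
  simpl. nra.
Qed.

Lemma S1_pos' v x : in_Nstar v -> 0 <= x -> Sj v 1 x <= m1 v * exp (- x).
Proof.
  intros Hv Hx. rewrite m1_Sj. unfold Sj. rewrite Rmult_comm, <- wsum_scal. apply wsum_le; auto.
  intros k K1 K2. rewrite Rmult_0_r, exp_0.
  assert (1 <= INR k) by (apply (le_INR 1); lia).
  assert (exp (- INR k * x) <= exp (-x)) by (apply exp_le; nra).
  simpl. nra.
Qed.

Lemma m1_pos v : in_Nstar v -> Nstar_nonzero v -> 0 < m1 v.
Proof. intros; rewrite m1_Sj; apply Sj_pos; auto. Qed.

Lemma g_surj v y : in_Nstar v -> Nstar_nonzero v -> 0 < y -> exists x, / Sj v 1 x = y.
Proof.
  intros Hv Hn Hy. pose proof (m1_pos v Hv Hn) as Hm.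
  set (A := Rabs (ln (y * m1 v))).
  assert (HA : 0 <= A) by apply Rabs_pos.
  assert (H1 : m1 v * exp (- - A) <= Sj v 1 (- A)) by (apply S1_neg; auto; lra).
  assert (H2 : Sj v 1 A <= m1 v * exp (- A)) by (apply S1_pos'; auto).
  assert (Hl : ln (y * m1 v) <= A) by apply Rle_abs.
  assert (Hl' : - A <= ln (y * m1 v)).
  { pose proof (Rle_abs (- ln (y * m1 v))) as Q. rewrite Rabs_Ropp in Q. unfold A; lra. }
  assert (E1 : exp (ln (y * m1 v)) = y * m1 v) by (apply exp_ln; nra).
  assert (E2 : / (y * m1 v) <= exp A) by (rewrite <- E1, <- exp_Ropp; apply exp_le; lra).
  assert (E3 : exp (- A) <= / (y * m1 v)) by (rewrite <- E1, <- exp_Ropp; apply exp_le; lra).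
  assert (E4 : y * m1 v * / (y * m1 v) = 1) by (apply Rinv_r; nra).
  assert (P1 : / y <= Sj v 1 (- A)).
  { rewrite Ropp_involutive in H1. apply Rle_trans with (2 := H1).
    apply Rmult_le_reg_l with y; auto. rewrite Rinv_r by lra. rewrite <- E4.
    replace (y * (m1 v * exp A)) with (y * m1 v * exp A) by ring.
    apply Rmult_le_compat_l; [nra|auto]. }
  assert (P2 : Sj v 1 A <= / y).
  { apply Rle_trans with (1 := H2).
    apply Rmult_le_reg_l with y; auto. rewrite Rinv_r by lra. rewrite <- E4.
    replace (y * (m1 v * exp (- A))) with (y * m1 v * exp (- A)) by ring.
    apply Rmult_le_compat_l; [nra|auto]. }
  destruct (IVT_gen (Sj v 1) (- A) A (/ y) (Sj_cont v 1)) as [x [_ Hx]].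
  - split.
    + apply Rle_trans with (2 := P2); apply Rmin_r.
    + apply Rle_trans with (1 := P1); apply Rmax_l.
  - exists x. rewrite Hx. apply Rinv_inv.
Qed.

Lemma is_derive_val (f : R -> R) (x l l' : R) : l = l' -> is_derive f x l -> is_derive f x l'.
Proof. intros ->; auto. Qed.

Lemma E_at v E x : in_Nstar v -> Nstar_nonzero v -> is_critical_core v E ->
  / E (/ Sj v 1 x) = Sj v 2 x * (/ Sj v 1 x) ^ 3.
Proof.
  intros Hv Hn HE. pose proof (HE x) as H. rewrite U0_D1, U0_D2 in H.
  rewrite Ropp_involutive, Rinv_opp, Ropp_involutive in H. rewrite H.
  assert (0 < Sj v 1 x) by (apply Sj_pos; auto).
  assert (0 < Sj v 2 x) by (apply Sj_pos; auto).
  field. split; lra.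
Qed.

Lemma EF1 v E y : in_Nstar v -> Nstar_nonzero v -> is_critical_core v E -> 0 < y ->
  0 < E y /\ y ^ 2 <= / E y <= Nv v * y ^ 2.
Proof.
  intros Hv Hn HE Hy. destruct (g_surj v y Hv Hn Hy) as [x Hx]. subst y.
  pose proof (E_at v E x Hv Hn HE) as H.
  assert (0 < Sj v 1 x) by (apply Sj_pos; auto).
  assert (0 < Sj v 2 x) by (apply Sj_pos; auto).
  pose proof (Sj_mono v 1 x Hv). pose proof (Sj_N v 1 x Hv).
  set (u := / Sj v 1 x) in *.
  assert (Hu : 0 < u) by (apply Rinv_0_lt_compat; auto).
  assert (Hsu : Sj v 1 x * u = 1) by (apply Rinv_r; lra).
  assert (0 < / E u) by (rewrite H; apply Rmult_lt_0_compat; [lra| apply pow_lt; lra]).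
  split.
  - replace (E u) with (/ / E u) by (apply Rinv_inv). apply Rinv_0_lt_compat; auto.
  - rewrite H. split.
    + assert (Sj v 2 x * u >= 1) by nra. 
      replace (Sj v 2 x * u ^ 3) with ((Sj v 2 x * u) * u ^ 2) by ring.
      assert (0 < u ^ 2) by (apply pow_lt; lra). nra.
    + assert (Sj v 2 x * u <= Nv v) by nra.
      replace (Sj v 2 x * u ^ 3) with ((Sj v 2 x * u) * u ^ 2) by ring.
      assert (0 < u ^ 2) by (apply pow_lt; lra). nra.
Qed.

Lemma g_derive v (x : R) : in_Nstar v -> Nstar_nonzero v ->
  is_derive (fun y => / Sj v 1 y) x (Sj v 2 x * (/ Sj v 1 x) ^ 2).
Proof.
  intros Hv Hn. assert (0 < Sj v 1 x) by (apply Sj_pos; auto).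
  eapply is_derive_val; [| apply is_derive_inv; [apply Sj_derive| lra]].
  field. lra.
Qed.

Lemma k_derive v (x : R) : in_Nstar v -> Nstar_nonzero v ->
  is_derive (fun y => Sj v 2 y * (/ Sj v 1 y) ^ 3) x
    (- Sj v 3 x * (/ Sj v 1 x) ^ 3 + 3 * (Sj v 2 x) ^ 2 * (/ Sj v 1 x) ^ 4).
Proof.
  intros Hv Hn. assert (0 < Sj v 1 x) by (apply Sj_pos; auto).
  eapply is_derive_val; [| apply is_derive_Rmult; [apply Sj_derive| apply is_derive_pow, g_derive; auto]].
  simpl. field. lra.
Qed.

Lemma g_mono v x1 x2 : in_Nstar v -> Nstar_nonzero v -> x1 <= x2 -> / Sj v 1 x1 <= / Sj v 1 x2.
Proof.
  intros Hv Hn H. apply (mono_le (fun y => / Sj v 1 y) (fun x => Sj v 2 x * (/ Sj v 1 x) ^ 2) x1 x2); auto.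
  - intros; apply g_derive; auto.
  - intros x _. apply Rmult_le_pos; [apply Rlt_le, Sj_pos; auto| apply pow2_ge_0].
Qed.

Lemma k_lip_x v S x1 x2 : in_Nstar v -> Nstar_nonzero v -> x1 <= x2 -> / Sj v 1 x2 <= S ->
  Rabs (Sj v 2 x1 * (/ Sj v 1 x1) ^ 3 - Sj v 2 x2 * (/ Sj v 1 x2) ^ 3)
    <= 4 * Nv v * S * (/ Sj v 1 x2 - / Sj v 1 x1).
Proof.
  intros Hv Hn H12 HS.
  assert (KEY : forall x, x1 <= x <= x2 ->
    Rabs (- Sj v 3 x * (/ Sj v 1 x) ^ 3 + 3 * (Sj v 2 x) ^ 2 * (/ Sj v 1 x) ^ 4)
      <= 4 * Nv v * S * (Sj v 2 x * (/ Sj v 1 x) ^ 2)).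
  { intros x Hx.
    assert (Hg : / Sj v 1 x <= S) by (apply Rle_trans with (2 := HS); apply g_mono; auto; lra).
    assert (0 < Sj v 1 x) by (apply Sj_pos; auto).
    assert (0 < Sj v 2 x) by (apply Sj_pos; auto).
    assert (0 < Sj v 3 x) by (apply Sj_pos; auto).
    pose proof (Sj_N v 1 x Hv). pose proof (Sj_N v 2 x Hv).
    set (u := / Sj v 1 x) in *.
    assert (Hu : 0 < u) by (apply Rinv_0_lt_compat; auto).
    assert (Hsu : Sj v 1 x * u = 1) by (apply Rinv_r; lra).
    set (s2 := Sj v 2 x) in *. set (s3 := Sj v 3 x) in *. set (N := Nv v) in *.
    assert (A1 : s2 * u <= N) by nra.
    assert (A2 : s3 * u ^ 3 <= N * S * (s2 * u ^ 2)).
    { assert (s3 * u <= N * s2 * u) by nra.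
      assert (0 < u ^ 2) by (apply pow_lt; lra).
      replace (s3 * u ^ 3) with ((s3 * u) * u ^ 2) by ring.
      apply Rle_trans with (N * s2 * u * u ^ 2); [nra|].
      assert (0 <= N * s2 * u ^ 2) by (assert (0 <= N) by nra; apply Rmult_le_pos; [nra|lra]).
      replace (N * s2 * u * u ^ 2) with ((N * s2 * u^2) * u) by ring.
      replace (N * S * (s2 * u ^ 2)) with ((N * s2 * u^2) * S) by ring.
      apply Rmult_le_compat_l; auto. }
    assert (A3 : 3 * s2 ^ 2 * u ^ 4 <= 3 * N * S * (s2 * u ^ 2)).
    { replace (3 * s2 ^ 2 * u ^ 4) with (3 * (s2 * u ^ 2) * (s2 * u) * u) by ring.
      assert (0 < s2 * u ^ 2) by (apply Rmult_lt_0_compat; [lra| apply pow_lt; lra]).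
      apply Rle_trans with (3 * (s2 * u ^ 2) * N * u).
      - apply Rmult_le_compat_r; [lra|]. apply Rmult_le_compat_l; lra.
      - replace (3 * N * S * (s2 * u ^ 2)) with (3 * (s2 * u ^ 2) * N * S) by ring.
        apply Rmult_le_compat_l; [|lra]. assert (0 <= N) by nra. nra. }
    assert (0 <= s3 * u ^ 3) by (apply Rmult_le_pos; [lra| apply pow_le; lra]).
    assert (0 <= 3 * s2 ^ 2 * u ^ 4) by (apply Rmult_le_pos; [nra| apply pow_le; lra]).
    apply Rabs_le. split; nra. }
  set (k := fun y => Sj v 2 y * (/ Sj v 1 y) ^ 3).
  set (g := fun y => / Sj v 1 y).
  set (c := 4 * Nv v * S).
  assert (P1 : c * g x1 - k x1 <= c * g x2 - k x2).
  { apply (mono_le (fun y => c * g y - k y)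
      (fun x => c * (Sj v 2 x * (/ Sj v 1 x) ^ 2) -
        (- Sj v 3 x * (/ Sj v 1 x) ^ 3 + 3 * (Sj v 2 x) ^ 2 * (/ Sj v 1 x) ^ 4))); auto.
    - intros x _. apply is_derive_Rminus; [apply is_derive_scal, g_derive| apply k_derive]; auto.
    - intros x Hx. pose proof (KEY x Hx) as Q. apply Rabs_le_between in Q. unfold c. lra. }
  assert (P2 : c * g x1 + k x1 <= c * g x2 + k x2).
  { apply (mono_le (fun y => c * g y + k y)
      (fun x => c * (Sj v 2 x * (/ Sj v 1 x) ^ 2) +
        (- Sj v 3 x * (/ Sj v 1 x) ^ 3 + 3 * (Sj v 2 x) ^ 2 * (/ Sj v 1 x) ^ 4))); auto.
    - intros x _. apply is_derive_Rplus; [apply is_derive_scal, g_derive| apply k_derive]; auto.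
    - intros x Hx. pose proof (KEY x Hx) as Q. apply Rabs_le_between in Q. unfold c. lra. }
  unfold k, g, c in *. apply Rabs_le. split; lra.
Qed.

Lemma EF2 v E S y1 y2 : in_Nstar v -> Nstar_nonzero v -> is_critical_core v E ->
  0 < y1 <= S -> 0 < y2 <= S -> Rabs (/ E y1 - / E y2) <= 4 * Nv v * S * Rabs (y1 - y2).
Proof.
  intros Hv Hn HE H1 H2.
  destruct (g_surj v y1 Hv Hn (proj1 H1)) as [x1 Hx1].
  destruct (g_surj v y2 Hv Hn (proj1 H2)) as [x2 Hx2]. subst y1 y2.
  rewrite (E_at v E x1 Hv Hn HE), (E_at v E x2 Hv Hn HE).
  destruct (Rle_dec x1 x2) as [H|H].
  - pose proof (g_mono v x1 x2 Hv Hn H).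
    rewrite (Rabs_left1 (/ Sj v 1 x1 - / Sj v 1 x2)) by lra.
    eapply Rle_trans. apply (k_lip_x v S x1 x2); auto; lra. apply Req_le; ring.
  - assert (x2 <= x1) by lra. pose proof (g_mono v x2 x1 Hv Hn H0).
    rewrite Rabs_minus_sym, (Rabs_minus_sym (/ Sj v 1 x1)).
    rewrite (Rabs_left1 (/ Sj v 1 x2 - / Sj v 1 x1)) by lra.
    eapply Rle_trans. apply (k_lip_x v S x2 x1); auto; lra. apply Req_le; ring.
Qed.

Notation cc := continuous_on_closed.

Lemma crossing (f : R -> R) a b : a < b -> cc f a b -> f a < 0 ->
  (forall t1, a < t1 < b -> f t1 = 0 -> (forall s, a <= s < t1 -> f s < 0) -> False) ->
  forall t, a <= t < b -> f t < 0.
Proof.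
  intros Hab Hc Ha Hx t0 Ht0.
  destruct (Rlt_dec (f t0) 0) as [|Hf]; auto. exfalso.
  set (Es := fun t => a <= t <= t0 /\ forall s, a <= s <= t -> f s < 0).
  assert (Hb : bound Es) by (exists t0; intros t [Ht _]; lra).
  assert (Hne : exists x, Es x) by (exists a; unfold Es; split; [lra| intros s Hs; replace s with a by lra; auto]).
  destruct (completeness Es Hb Hne) as [m [Hub Hlub]].
  assert (Ham : a <= m) by (apply Hub; unfold Es; split; [lra| intros s Hs; replace s with a by lra; auto]).
  assert (Hmc : m <= t0) by (apply Hlub; intros t [Ht _]; lra).
  assert (Hleft : forall s, a <= s < m -> f s < 0).
  { intros s Hs. destruct (Rlt_dec (f s) 0) as [|Hfs]; auto. exfalso.
    assert (m <= s); [|lra]. apply Hlub. intros t [Ht1 Ht2].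
    destruct (Rle_dec t s); auto. exfalso. apply Hfs, Ht2; lra. }
  destruct (Rtotal_order (f m) 0) as [Hlt|[Heq|Hgt]].
  - destruct (Hc m ltac:(lra) (- f m) ltac:(lra)) as [d [Hd Hd']].
    destruct (Req_dec m t0) as [Hmc'|Hmc'].
    + rewrite <- Hmc' in Hf. lra.
    + assert (Hmt : m < t0) by (destruct (Rle_lt_or_eq_dec _ _ Hmc); [auto| contradiction]).
      set (t' := Rmin (m + d / 2) t0).
      assert (Et' : Es t').
      { split. unfold t'; split; [apply Rmin_glb; lra| apply Rmin_r].
        intros s Hs. destruct (Rlt_dec s m); [apply Hleft; lra|].
        assert (t' <= m + d / 2) by apply Rmin_l.
        assert (Hs' : Rabs (s - m) < d) by (apply Rabs_def1; lra).
        pose proof (Hd' s ltac:(unfold t' in *; pose proof (Rmin_r (m + d / 2) t0); lra) Hs') as Q.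
        apply Rabs_def2 in Q. lra. }
      assert (t' <= m) by (apply Hub; auto).
      unfold t' in *. pose proof (Rmin_glb_lt (m + d / 2) t0 m ltac:(lra) ltac:(lra)). lra.
  - apply (Hx m); auto. split; [|lra].
    destruct (Req_dec a m) as [E|E]; [rewrite <- E in Heq; lra|].
    destruct (Rle_lt_or_eq_dec _ _ Ham); [auto| contradiction].
  - assert (Ham' : a < m) by (destruct (Req_dec a m) as [E|E]; [rewrite <- E in Hgt; lra| destruct (Rle_lt_or_eq_dec _ _ Ham); [auto| contradiction]]).
    destruct (Hc m ltac:(lra) (f m) Hgt) as [d [Hd Hd']].
    set (s := Rmax a (m - d / 2)).
    assert (s < m) by (unfold s; apply Rmax_lub_lt; lra).
    assert (a <= s) by apply Rmax_l.
    assert (m - d / 2 <= s) by apply Rmax_r.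
    assert (Hs' : Rabs (s - m) < d) by (apply Rabs_def1; lra).
    pose proof (Hd' s ltac:(lra) Hs') as Q. apply Rabs_def2 in Q.
    pose proof (Hleft s ltac:(lra)). lra.
Qed.

Lemma closure_pt (f : R -> R) a b : a < b -> cc f a b -> (forall t, a <= t < b -> f t < 0) -> f b <= 0.
Proof.
  intros Hab Hc H. destruct (Rle_dec (f b) 0) as [|Hf]; auto. exfalso.
  destruct (Hc b ltac:(lra) (f b) ltac:(lra)) as [d [Hd Hd']].
  set (s := Rmax a (b - d / 2)).
  assert (s < b) by (unfold s; apply Rmax_lub_lt; lra).
  assert (a <= s) by apply Rmax_l.
  assert (b - d / 2 <= s) by apply Rmax_r.
  assert (Hs' : Rabs (s - b) < d) by (apply Rabs_def1; lra).
  pose proof (Hd' s ltac:(lra) Hs') as Q. apply Rabs_def2 in Q.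
  pose proof (H s ltac:(lra)). lra.
Qed.

Lemma crossing_closed (f : R -> R) a b : a < b -> cc f a b -> f a < 0 ->
  (forall t1, a < t1 < b -> f t1 = 0 -> (forall s, a <= s < t1 -> f s < 0) -> False) ->
  forall t, a <= t <= b -> f t <= 0.
Proof.
  intros Hab Hc Ha Hx t Ht. destruct (Req_dec t b) as [->|].
  - apply (closure_pt f a b); auto. apply crossing; auto.
  - apply Rlt_le, (crossing f a b); auto; lra.
Qed.

Lemma left_compare (u w : R -> R) (t du dw : R) :
  is_derive u t du -> is_derive w t dw ->
  (exists d, 0 < d /\ forall h, 0 < h < d -> w t - w (t - h) <= u t - u (t - h)) ->
  dw <= du.
Proof.
  intros Hu Hw [d [Hd H]].
  destruct (Rle_dec dw du) as [|Hn]; auto. exfalso.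
  assert (Hphi : is_derive (fun y => u y - w y) t (du - dw)).
  { exact (is_derive_minus u w t du dw Hu Hw). }
  apply is_derive_Reals in Hphi.
  destruct (Hphi ((dw - du) / 2) ltac:(lra)) as [e He].
  set (h := Rmin (d / 2) (e / 2)).
  assert (Hh : 0 < h) by (apply Rmin_glb_lt; destruct e; simpl; lra).
  assert (h <= d / 2) by apply Rmin_l.
  assert (h <= e / 2) by apply Rmin_r.
  assert (Hne : - h <> 0) by lra.
  assert (Habs : Rabs (- h) < e) by (rewrite Rabs_Ropp, Rabs_right by lra; destruct e; simpl in *; lra).
  pose proof (He (- h) Hne Habs) as Q. apply Rabs_def2 in Q.
  pose proof (H h ltac:(lra)) as Q2.
  replace (t + - h) with (t - h) in Q by ring.
  assert (Hq : 0 <= (u (t - h) - w (t - h) - (u t - w t)) / - h).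
  { replace ((u (t - h) - w (t - h) - (u t - w t)) / - h) with ((u t - u (t - h) - (w t - w (t - h))) * / h)
      by (field; lra).
    apply Rmult_le_pos; [lra| apply Rlt_le, Rinv_0_lt_compat; lra]. }
  lra.
Qed.

Lemma cc_ext (f g : R -> R) a b : (forall t, a <= t <= b -> f t = g t) -> cc f a b -> cc g a b.
Proof.
  intros E H t Ht eps He. destruct (H t Ht eps He) as [d [Hd Hd']]. exists d; split; auto.
  intros s Hs Hst. rewrite <- !E by auto. auto.
Qed.

Lemma cc_lip (f g : R -> R) a b K : 0 <= K ->
  (forall s t, a <= s <= b -> a <= t <= b -> Rabs (g s - g t) <= K * Rabs (f s - f t)) ->
  cc f a b -> cc g a b.
Proof.
  intros HK HL H t Ht eps He. destruct (H t Ht (eps / (K + 1))) as [d [Hd Hd']].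
  { apply Rdiv_lt_0_compat; lra. }
  exists d; split; auto. intros s Hs Hst.
  pose proof (Hd' s Hs Hst). pose proof (HL s t Hs Ht).
  pose proof (Rabs_pos (f s - f t)).
  apply Rle_lt_trans with (K * Rabs (f s - f t)); auto.
  apply Rle_lt_trans with ((K + 1) * Rabs (f s - f t)); [nra|].
  apply Rmult_lt_reg_r with (/ (K + 1)). apply Rinv_0_lt_compat; lra.
  replace ((K + 1) * Rabs (f s - f t) * / (K + 1)) with (Rabs (f s - f t)) by (field; lra).
  exact H0.
Qed.

Lemma cc_plus (f g : R -> R) a b : cc f a b -> cc g a b -> cc (fun t => f t + g t) a b.
Proof.
  intros Hf Hg t Ht eps He.
  destruct (Hf t Ht (eps / 2) ltac:(lra)) as [d1 [Hd1 H1]].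
  destruct (Hg t Ht (eps / 2) ltac:(lra)) as [d2 [Hd2 H2]].
  exists (Rmin d1 d2). split; [apply Rmin_glb_lt; auto|]. intros s Hs Hst.
  pose proof (Rmin_l d1 d2). pose proof (Rmin_r d1 d2).
  pose proof (H1 s Hs ltac:(lra)). pose proof (H2 s Hs ltac:(lra)).
  replace (f s + g s - (f t + g t)) with ((f s - f t) + (g s - g t)) by ring.
  eapply Rle_lt_trans; [apply Rabs_triang| lra].
Qed.

Lemma cc_scal (f : R -> R) a b c : cc f a b -> cc (fun t => c * f t) a b.
Proof.
  intros H. apply (cc_lip f _ a b (Rabs c)); auto. apply Rabs_pos.
  intros s t _ _. rewrite <- Rabs_mult. right; f_equal; ring.
Qed.

Lemma cc_minus (f g : R -> R) a b : cc f a b -> cc g a b -> cc (fun t => f t - g t) a b.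
Proof.
  intros Hf Hg. apply (cc_ext (fun t => f t + (-1) * g t)); [intros; ring|].
  apply cc_plus; auto. apply cc_scal; auto.
Qed.

Lemma cc_of_derive (f : R -> R) a b : (forall t, a <= t <= b -> ex_derive f t) -> cc f a b.
Proof.
  intros H t Ht eps He.
  assert (Hc : continuity_pt f t).
  { apply continuity_pt_filterlim. apply (ex_derive_continuous (K:=R_AbsRing) (V:=R_NormedModule)). auto. }
  destruct (Hc eps He) as [d [Hd Hd']]. exists d; split; auto.
  intros s Hs Hst. destruct (Req_dec s t) as [->|Hne].
  { unfold Rminus; rewrite Rplus_opp_r, Rabs_R0; lra. }
  apply (Hd' s). split; [split; [constructor| auto]| exact Hst].
Qed.

Lemma cc_const c a b : cc (fun _ => c) a b.
Proof. intros t Ht eps He. exists 1; split; [lra|]. intros. unfold Rminus; rewrite Rplus_opp_r, Rabs_R0; lra. Qed.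

Lemma cc_sub (f : R -> R) a b a' b' : a <= a' -> b' <= b -> cc f a b -> cc f a' b'.
Proof.
  intros H1 H2 H t Ht eps He. destruct (H t ltac:(lra) eps He) as [d [Hd Hd']].
  exists d; split; auto. intros s Hs Hst. apply Hd'; auto; lra.
Qed.

Lemma le_eps x K : 0 < K -> (forall eta, 0 < eta -> x <= eta * K) -> x <= 0.
Proof.
  intros HK H. destruct (Rle_dec x 0) as [|Hn]; auto.
  pose proof (H (x / (2 * K)) ltac:(apply Rdiv_lt_0_compat; lra)).
  replace (x / (2 * K) * K) with (x / 2) in H0 by (field; lra). lra.
Qed.

Lemma mono_cc (f df : R -> R) a b : a < b -> cc f a b ->
  (forall t, a < t < b -> is_derive f t (df t)) -> (forall t, a < t < b -> 0 <= df t) ->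
  forall t, a <= t <= b -> f a <= f t.
Proof.
  intros Hab Hc Hd Hp t Ht.
  assert (forall eta, 0 < eta -> f a - f t <= eta * (t - a + 1)).
  { intros eta He.
    set (g := fun y => f a - f y - eta * (y - a) - eta).
    assert (g t <= 0).
    { apply (crossing_closed g a b); auto.
      - unfold g. apply cc_minus; [apply cc_minus; [apply cc_minus; [apply cc_const| auto]|]| apply cc_const].
        apply cc_of_derive; intros. auto_derive. auto.
      - unfold g. lra.
      - intros t1 Ht1 Hg0 Hl.
        assert (0 <= - df t1 - eta).
        { apply (left_compare (fun y => f a - f y - eta * y) (fun _ => 0) t1 (- df t1 - eta) 0).
          - eapply is_derive_val; [| apply is_derive_Rminus; [apply is_derive_Rminus; [apply is_derive_const| apply Hd; auto]| apply is_derive_scal, is_derive_id]].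
            unfold zero, one; simpl; ring.
          - exact (@is_derive_const R_AbsRing R_NormedModule 0 t1).
          - exists (t1 - a). split; [lra|]. intros h Hh.
            pose proof (Hl (t1 - h) ltac:(lra)). unfold g in *. lra. }
        pose proof (Hp t1 Ht1). lra. }
    unfold g in *. lra. }
  assert (f a - f t <= 0); [|lra].
  apply (le_eps _ (t - a + 1)); auto; lra.
Qed.

Lemma divle X Y z : 0 < z -> X <= Y * z -> X / z <= Y.
Proof. intros Hz H. apply Rmult_le_reg_r with z; auto. unfold Rdiv. rewrite Rmult_assoc, Rinv_l by lra. lra. Qed.

Lemma ledive X Y z : 0 < z -> Y * z <= X -> Y <= X / z.
Proof. intros Hz H. apply Rmult_le_reg_r with z; auto. unfold Rdiv. rewrite Rmult_assoc, Rinv_l by lra. lra. Qed.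

Lemma exp_ge1 x : 0 <= x -> 1 <= exp x.
Proof. intros; rewrite <- exp_0; apply exp_le; auto. Qed.

Lemma ln_le' x y : 0 < x -> x <= y -> ln x <= ln y.
Proof. intros Hx H. destruct (Rle_lt_or_eq_dec _ _ H) as [H1|H1]; [apply Rlt_le, ln_increasing; auto| subst; lra]. Qed.

Lemma ln_le_xm1 z : 0 < z -> ln z <= z - 1.
Proof.
  intros Hz. rewrite <- (ln_exp (z - 1)). apply ln_le'; auto.
  pose proof (exp_ineq1_le (z - 1)). lra.
Qed.

Section ODE.
Variables (v : list R) (E : R -> R) (T lam : R) (w : R -> R).
Hypothesis Hv : in_Nstar v.
Hypothesis Hn : Nstar_nonzero v.
Hypothesis HE : is_critical_core v E.
Hypothesis HT : 0 < T.
Hypothesis Hl : 0 < lam <= 1.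
Hypothesis Hw : is_wstar_solution v E lam T w.

Definition y0 := / m1 v.
Definition NN := Nv v.
Definition G y := / E y.
Definition s t := t + w t.

Lemma y0_pos : 0 < y0.
Proof. unfold y0; apply Rinv_0_lt_compat, m1_pos; auto. Qed.

Lemma NN_ge1 : 1 <= NN.
Proof. apply Nv_ge1; auto. Qed.

Lemma G_bounds y : 0 < y -> 0 < E y /\ y ^ 2 <= G y <= NN * y ^ 2.
Proof. intros; apply EF1; auto. Qed.

Lemma G_lip S y1 y2 : 0 < y1 <= S -> 0 < y2 <= S -> Rabs (G y1 - G y2) <= 4 * NN * S * Rabs (y1 - y2).
Proof. intros; apply EF2; auto. Qed.

Lemma cc_w : cc w 0 T.
Proof. apply Hw. Qed.

Lemma w0 : w 0 = y0.
Proof. apply Hw. Qed.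

Lemma w_pos t : 0 <= t <= T -> 0 < w t.
Proof.
  intros Ht. destruct Hw as [Hc [H0 [Hp Hd]]].
  assert (-w t <= 0).
  { apply (crossing_closed (fun t => - w t) 0 T); auto.
    - apply (cc_ext (fun t => -1 * w t)); [intros; ring| apply cc_scal; auto].
    - rewrite H0. pose proof y0_pos. unfold y0 in *. lra.
    - intros t1 Ht1 Hz _. apply (proj1 (Hp t1 ltac:(lra))). lra. }
  destruct (Hp t Ht). lra.
Qed.

Lemma s_pos t : 0 <= t <= T -> 0 < s t.
Proof. intros Ht. destruct Hw as [_ [_ [Hp _]]]. apply Hp; auto. Qed.

Lemma w_der t : 0 < t < T -> is_derive w t (lam * G (s t) / w t - 1).
Proof.
  intros Ht. destruct Hw as [_ [_ [_ Hd]]].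
  pose proof (w_pos t ltac:(lra)). pose proof (G_bounds (s t) (s_pos t ltac:(lra))) as [HE' _].
  eapply is_derive_val; [| apply Hd; auto]. unfold G, s in *. field. split; lra.
Qed.

Lemma s_der t : 0 < t < T -> is_derive s t (lam * G (s t) / w t).
Proof.
  intros Ht. eapply is_derive_val; [| apply is_derive_Rplus; [apply is_derive_id| apply w_der; auto]].
  simpl. unfold one. simpl. ring.
Qed.

Lemma cc_s a b : 0 <= a -> b <= T -> cc s a b.
Proof.
  intros Ha Hb. apply (cc_sub _ 0 T); auto. unfold s. apply cc_plus; [| apply cc_w].
  apply cc_of_derive. intros; auto_derive; auto.
Qed.

Lemma s_mono p q : 0 <= p -> p <= q -> q <= T -> s p <= s q.
Proof.
  intros Hp Hpq Hq. destruct (Req_dec p q) as [->|Hne]; [lra|].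
  apply (mono_cc s (fun t => lam * G (s t) / w t) p q); auto; try lra.
  - apply cc_s; auto.
  - intros t Ht. apply s_der; lra.
  - intros t Ht. pose proof (w_pos t ltac:(lra)). pose proof (G_bounds (s t) (s_pos t ltac:(lra))) as [_ [H1 _]].
    assert (0 <= G (s t)) by (pose proof (pow2_ge_0 (s t)); lra).
    apply Rmult_le_pos; [apply Rmult_le_pos; lra| apply Rlt_le, Rinv_0_lt_compat; auto].
Qed.

Lemma s_ge t : 0 <= t <= T -> y0 <= s t.
Proof.
  intros Ht. replace y0 with (s 0) by (unfold s; rewrite w0; ring). apply s_mono; lra.
Qed.


Definition kA := 4 * NN + 1.
Definition W := 2 * (T + y0) * exp (kA * T).
Definition SS := T + W.
Definition cst := NN * SS ^ 2.
Definition b0 := Rmin y0 (y0 ^ 2) / 2.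

Lemma w_le_W t : 0 <= t <= T -> w t <= W.
Proof.
  intros Ht. pose proof y0_pos. pose proof NN_ge1.
  set (B := fun t => 2 * (T + y0) * exp (kA * t)).
  assert (w t - B t <= 0).
  { apply (crossing_closed (fun t => w t - B t) 0 T); auto.
    - apply cc_minus; [apply cc_w|]. apply cc_of_derive; intros; unfold B; auto_derive; auto.
    - rewrite w0. unfold B. rewrite Rmult_0_r, exp_0. lra.
    - intros t1 Ht1 Hz Hlt.
      assert (HB : kA * B t1 <= lam * G (s t1) / w t1 - 1).
      { apply (left_compare w B t1).
        - apply w_der; auto.
        - unfold B. auto_derive; auto. ring.
        - exists t1; split; [lra|]. intros h Hh. pose proof (Hlt (t1 - h) ltac:(lra)). lra. }
      assert (Hw1 : w t1 = B t1) by lra.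
      assert (Hwp : 0 < w t1) by (apply w_pos; lra).
      assert (HBT : T <= B t1).
      { unfold B. pose proof (exp_ge1 (kA * t1) ltac:(unfold kA; apply Rmult_le_pos; lra)). nra. }
      pose proof (G_bounds (s t1) (s_pos t1 ltac:(lra))) as [_ [Hg1 Hg2]].
      assert (Hs2 : s t1 <= 2 * w t1) by (unfold s; lra).
      assert (Hs0 : 0 < s t1) by (apply s_pos; lra).
      assert (HG : lam * G (s t1) <= 4 * NN * w t1 * w t1).
      { assert (0 <= G (s t1)) by (pose proof (pow2_ge_0 (s t1)); lra).
        apply Rle_trans with (G (s t1)); [nra|]. apply Rle_trans with (1 := Hg2).
        assert (s t1 ^ 2 <= 4 * w t1 * w t1) by nra. nra. }
      assert (lam * G (s t1) / w t1 <= 4 * NN * w t1) by (apply divle; auto).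
      unfold kA in HB. rewrite <- Hw1 in HB. nra. }
  apply Rle_trans with (B t); [lra|]. unfold B, W.
  apply Rmult_le_compat_l; [lra|]. apply exp_le. unfold kA. apply Rmult_le_compat_l; lra.
Qed.

Lemma W_pos : 0 < W.
Proof. unfold W. pose proof y0_pos. apply Rmult_lt_0_compat; [lra| apply exp_pos]. Qed.

Lemma cst_pos : 0 < cst.
Proof. unfold cst, SS. pose proof W_pos. pose proof NN_ge1. apply Rmult_lt_0_compat; [lra| apply pow_lt; lra]. Qed.

Lemma s_le t : 0 <= t <= T -> s t <= SS.
Proof. intros Ht. unfold s, SS. pose proof (w_le_W t Ht). lra. Qed.

Lemma G_s_le t : 0 <= t <= T -> G (s t) <= cst.
Proof.
  intros Ht. pose proof (s_pos t Ht). pose proof (s_le t Ht). pose proof NN_ge1.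
  destruct (G_bounds (s t)) as [_ [_ H2]]; auto. unfold cst. apply Rle_trans with (1 := H2).
  apply Rmult_le_compat_l; [lra|]. apply pow_incr; lra.
Qed.

Lemma wder_le t : 0 < t < T -> lam * G (s t) / w t - 1 <= cst * lam / w t - 1.
Proof.
  intros Ht. pose proof (w_pos t ltac:(lra)). pose proof (G_s_le t ltac:(lra)).
  unfold Rdiv. apply Rplus_le_compat_r. apply Rmult_le_compat_r; [apply Rlt_le, Rinv_0_lt_compat; auto|].
  nra.
Qed.

Lemma b0_pos : 0 < b0.
Proof. unfold b0. pose proof y0_pos. apply Rdiv_lt_0_compat; [apply Rmin_glb_lt; [lra| apply pow_lt; lra]| lra]. Qed.

Lemma w_ge t : 0 <= t <= T -> lam * b0 <= w t.
Proof.
  intros Ht. pose proof y0_pos. pose proof b0_pos.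
  assert (Hb1 : b0 <= y0 / 2) by (unfold b0; pose proof (Rmin_l y0 (y0 ^ 2)); lra).
  assert (Hb2 : b0 <= y0 ^ 2 / 2) by (unfold b0; pose proof (Rmin_r y0 (y0 ^ 2)); lra).
  assert (lam * b0 - w t <= 0); [|lra].
  apply (crossing_closed (fun t => lam * b0 - w t) 0 T); auto.
  - apply cc_minus; [apply cc_const| apply cc_w].
  - rewrite w0. nra.
  - intros t1 Ht1 Hz Hlt.
    assert (HB : lam * G (s t1) / w t1 - 1 <= 0).
    { apply (left_compare (fun _ => 0) w t1).
      - exact (@is_derive_const R_AbsRing R_NormedModule 0 t1).
      - apply w_der; auto.
      - exists t1; split; [lra|]. intros h Hh. pose proof (Hlt (t1 - h) ltac:(lra)). lra. }
    assert (Hw1 : w t1 = lam * b0) by lra.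
    pose proof (s_ge t1 ltac:(lra)).
    pose proof (G_bounds (s t1) (s_pos t1 ltac:(lra))) as [_ [Hg1 Hg2]].
    assert (y0 ^ 2 <= G (s t1)) by (apply Rle_trans with (2 := Hg1); apply pow_incr; lra).
    assert (2 <= lam * G (s t1) / w t1).
    { rewrite Hw1. apply ledive; [nra|]. assert (0 < lam) by lra. nra. }
    lra.
Qed.

Definition Pf t := y0 - t + lam + cst * lam * (ln (y0 + lam) - ln (y0 - t + lam)).

Lemma phase1a : y0 <= T -> forall t, 0 <= t <= y0 -> w t <= Pf t.
Proof.
  intros HyT t Ht. pose proof y0_pos. pose proof cst_pos.
  assert (w t - Pf t <= 0); [|lra].
  apply (crossing_closed (fun t => w t - Pf t) 0 y0); auto.
  - apply cc_minus; [apply (cc_sub _ 0 T); auto; try lra; apply cc_w|].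
    apply cc_of_derive; intros t' Ht'. unfold Pf. auto_derive. lra.
  - rewrite w0. unfold Pf. rewrite Rminus_0_r. replace (ln (y0 + lam) - ln (y0 + lam)) with 0 by ring. lra.
  - intros t1 Ht1 Hz Hlt.
    assert (HB : -1 + cst * lam / (y0 - t1 + lam) <= lam * G (s t1) / w t1 - 1).
    { apply (left_compare w Pf t1).
      - apply w_der; lra.
      - unfold Pf. auto_derive; [lra|]. field. lra.
      - exists t1; split; [lra|]. intros h Hh. pose proof (Hlt (t1 - h) ltac:(lra)). lra. }
    pose proof (wder_le t1 ltac:(lra)).
    assert (Hw1 : w t1 = Pf t1) by lra.
    assert (Hln : ln (y0 - t1 + lam) < ln (y0 + lam)) by (apply ln_increasing; lra).
    assert (HP : y0 - t1 + lam < w t1).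
    { rewrite Hw1. unfold Pf. assert (0 < cst * lam) by nra. nra. }
    assert (cst * lam / w t1 < cst * lam / (y0 - t1 + lam)).
    { unfold Rdiv. apply Rmult_lt_compat_l; [nra|]. apply Rinv_lt_contravar; [nra| lra]. }
    lra.
Qed.

Definition P1 := lam + cst * lam * (ln (y0 + lam) - ln lam).
Definition tau := y0 + 3 * P1.

Lemma P1_pos : lam <= P1.
Proof.
  unfold P1. pose proof y0_pos. pose proof cst_pos.
  assert (ln lam < ln (y0 + lam)) by (apply ln_increasing; lra).
  assert (0 <= cst * lam * (ln (y0 + lam) - ln lam)) by (apply Rmult_le_pos; nra). lra.
Qed.

Lemma phase1b : tau <= T -> w tau <= 2 * cst * lam.
Proof.
  intros HtT. pose proof y0_pos. pose proof cst_pos. pose proof P1_pos.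
  assert (HyT : y0 <= T) by (unfold tau in *; lra).
  set (Q := fun t => P1 + 2 * cst * lam - (t - y0) / 3).
  assert (w tau - Q tau <= 0).
  { apply (crossing_closed (fun t => w t - Q t) y0 tau); auto; try (unfold tau; lra).
    - apply cc_minus; [apply (cc_sub _ 0 T); auto; try lra; apply cc_w|].
      apply cc_of_derive; intros t' Ht'. unfold Q. auto_derive. auto.
    - pose proof (phase1a HyT y0 ltac:(lra)) as Ha1. unfold Pf in Ha1.
      replace (y0 - y0 + lam) with lam in Ha1 by ring. fold P1 in Ha1.
      unfold Q. replace (y0 - y0) with 0 by ring. assert (0 < cst * lam) by nra. lra.
    - intros t1 Ht1 Hz Hlt.
      assert (HB : - / 3 <= lam * G (s t1) / w t1 - 1).
      { apply (left_compare w Q t1).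
        - apply w_der; unfold tau in *; lra.
        - unfold Q. auto_derive; auto. field.
        - exists (t1 - y0); split; [lra|]. intros h Hh. pose proof (Hlt (t1 - h) ltac:(lra)). lra. }
      pose proof (wder_le t1 ltac:(unfold tau in *; lra)).
      assert (Hw1 : w t1 = Q t1) by lra.
      assert (Hq2 : 2 * cst * lam < w t1) by (rewrite Hw1; unfold Q, tau in *; lra).
      assert (cst * lam / w t1 <= / 2).
      { apply divle; [nra|]. lra. }
      lra. }
  unfold Q in *. unfold tau in *. lra.
Qed.

Lemma phase2inv : tau <= T -> forall t, tau <= t <= T -> w t <= 4 * cst * lam.
Proof.
  intros HtT t Ht. pose proof y0_pos. pose proof cst_pos. pose proof P1_pos.
  pose proof phase1b HtT.
  assert (0 < cst * lam) by nra.
  destruct (Req_dec tau T) as [Heq|Hne].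
  { replace t with tau by lra. lra. }
  assert (w t - 4 * cst * lam <= 0); [|lra].
  apply (crossing_closed (fun t => w t - 4 * cst * lam) tau T); auto; try lra.
  - apply cc_minus; [apply (cc_sub _ 0 T); unfold tau in *; auto; try lra; apply cc_w| apply cc_const].
  - intros t1 Ht1 Hz Hlt.
    assert (HB : 0 <= lam * G (s t1) / w t1 - 1).
    { apply (left_compare w (fun _ => 0) t1).
      - apply w_der; unfold tau in *; lra.
      - exact (@is_derive_const R_AbsRing R_NormedModule 0 t1).
      - exists (t1 - tau); split; [lra|]. intros h Hh. pose proof (Hlt (t1 - h) ltac:(lra)). lra. }
    pose proof (wder_le t1 ltac:(unfold tau in *; lra)).
    assert (Hw1 : w t1 = 4 * cst * lam) by lra.
    assert (cst * lam / w t1 <= / 4).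
    { apply divle; [nra|]. lra. }
    lra.
Qed.

Lemma alg_up q x y Bv Cl2 K : 0 < q -> 0 < x <= 4 * q -> 0 < Bv -> Cl2 <= Bv ->
  - (Bv - Cl2) / (8 * q) <= - Bv / x + y -> y <= K -> 8 * q * K < 2 * Cl2 -> False.
Proof.
  intros Hq Hx HB HC H1 H2 H3.
  assert (Bv / (4 * q) <= Bv / x).
  { unfold Rdiv. apply Rmult_le_compat_l; [lra|]. apply Rinv_le_contravar; lra. }
  assert (- (Bv - Cl2) / (8 * q) <= - (Bv / (4 * q)) + K) by (unfold Rdiv in *; lra).
  assert (E1 : - (Bv - Cl2) / (8 * q) * (8 * q) = - (Bv - Cl2)) by (field; lra).
  assert (E2 : (- (Bv / (4 * q)) + K) * (8 * q) = - 2 * Bv + 8 * q * K) by (field; lra).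
  assert (- (Bv - Cl2) <= - 2 * Bv + 8 * q * K).
  { rewrite <- E1, <- E2. apply Rmult_le_compat_r; lra. }
  lra.
Qed.

Lemma alg_lo q x Bv Cl2 K : 0 < q -> 0 < x <= 4 * q -> 0 < Bv -> Cl2 <= Bv ->
  Bv / x - (Bv - Cl2) / (8 * q) <= K -> 8 * q * K < 2 * Cl2 -> False.
Proof.
  intros Hq Hx HB HC H1 H3.
  assert (Bv / (4 * q) <= Bv / x).
  { unfold Rdiv. apply Rmult_le_compat_l; [lra|]. apply Rinv_le_contravar; lra. }
  assert (Bv / (4 * q) - (Bv - Cl2) / (8 * q) <= K) by lra.
  assert (E1 : (Bv / (4 * q) - (Bv - Cl2) / (8 * q)) * (8 * q) = Bv + Cl2) by (field; lra).
  assert (Bv + Cl2 <= 8 * q * K).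
  { rewrite <- E1. replace (8 * q * K) with (K * (8 * q)) by ring. apply Rmult_le_compat_r; lra. }
  lra.
Qed.

Definition LG := 4 * NN * SS.
Definition CC := 4 * LG * cst ^ 2 / b0 + 1.
Definition th := 8 * cst * lam.
Definition AA := 6 * cst * lam.
Definition Bar t := CC * lam ^ 2 + AA * exp (- (t - tau) / th).
Definition aa t := lam * G (s t).

Lemma LG_pos : 0 < LG.
Proof. unfold LG, SS. pose proof NN_ge1. pose proof W_pos. apply Rmult_lt_0_compat; lra. Qed.

Lemma CC_pos : 1 <= CC.
Proof.
  unfold CC. pose proof LG_pos. pose proof b0_pos. pose proof cst_pos.
  assert (0 <= 4 * LG * cst ^ 2 / b0); [|lra].
  apply Rlt_le, Rdiv_lt_0_compat; auto. apply Rmult_lt_0_compat; [lra| apply pow_lt; lra].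
Qed.

Lemma aa_lip p q : 0 <= p <= T -> 0 <= q <= T -> Rabs (aa p - aa q) <= lam * LG * Rabs (s p - s q).
Proof.
  intros Hp Hq. unfold aa. replace (lam * G (s p) - lam * G (s q)) with (lam * (G (s p) - G (s q))) by ring.
  rewrite Rabs_mult, Rabs_right by lra. rewrite Rmult_assoc. apply Rmult_le_compat_l; [lra|].
  apply G_lip; split; try apply s_pos; try apply s_le; auto.
Qed.

Lemma cc_aa a b : 0 <= a -> b <= T -> cc aa a b.
Proof.
  intros Ha Hb. apply (cc_lip s aa a b (lam * LG)).
  - pose proof LG_pos. nra.
  - intros p q Hp Hq. apply aa_lip; lra.
  - apply cc_s; auto.
Qed.

Lemma K_lt : 8 * (cst * lam) * (lam * LG * cst / b0) < 2 * (CC * lam ^ 2).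
Proof.
  pose proof b0_pos. pose proof LG_pos. pose proof cst_pos.
  unfold CC. replace (8 * (cst * lam) * (lam * LG * cst / b0)) with (2 * (4 * LG * cst ^ 2 / b0 * lam ^ 2))
    by (field; lra).
  assert (0 < lam ^ 2) by (apply pow_lt; lra). lra.
Qed.

Lemma relax : tau <= T -> forall t, tau <= t <= T -> Rabs (w t - aa t) <= Bar t.
Proof.
  intros HtT t Ht. pose proof y0_pos. pose proof cst_pos. pose proof P1_pos. pose proof LG_pos.
  pose proof CC_pos. pose proof b0_pos.
  assert (Hq : 0 < cst * lam) by nra.
  assert (Hy : y0 <= tau) by (unfold tau; lra).
  assert (Hth : 0 < th) by (unfold th; lra).
  assert (HBar : forall t, CC * lam ^ 2 < Bar t).
  { intros t'. unfold Bar, AA. pose proof (exp_pos (- (t' - tau) / th)). nra. }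
  assert (Hw0 : Rabs (w tau - aa tau) < Bar tau).
  { unfold Bar, AA. replace (- (tau - tau) / th) with 0 by (unfold Rdiv; ring). rewrite exp_0.
    pose proof (w_pos tau ltac:(lra)). pose proof (phase2inv HtT tau ltac:(lra)).
    assert (0 <= aa tau <= cst * lam).
    { unfold aa. pose proof (G_s_le tau ltac:(lra)).
      destruct (G_bounds (s tau) (s_pos tau ltac:(lra))) as [_ [Hg _]].
      pose proof (pow2_ge_0 (s tau)). split; nra. }
    assert (0 < CC * lam ^ 2) by (apply Rmult_lt_0_compat; [lra| apply pow_lt; lra]).
    apply Rabs_def1; lra. }
  destruct (Req_dec tau T) as [Heq|Hne].
  { replace t with tau by lra. lra. }
  assert (HbarD : forall t : R, is_derive Bar t (- (Bar t - CC * lam ^ 2) / th)).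
  { intros t'. unfold Bar. auto_derive; auto. replace (- (t' + - tau) * / th) with (- (t' - tau) / th) by (unfold Rdiv; ring). field. lra. }
  assert (Hcc : cc (fun t => w t - aa t) tau T).
  { apply cc_minus; [apply (cc_sub _ 0 T); auto; try lra; apply cc_w| apply cc_aa; lra]. }
  assert (HccB : cc Bar tau T) by (apply cc_of_derive; intros; eexists; apply HbarD).
  assert (Hfacts : forall t1, tau < t1 < T ->
    0 < t1 < T /\ lam * b0 <= w t1 <= 4 * cst * lam /\ 0 <= aa t1 <= cst * lam /\
    lam * G (s t1) / w t1 - 1 = (aa t1 - w t1) / w t1 /\ lam * G (s t1) / w t1 = aa t1 / w t1).
  { intros t1 Ht1. split; [lra|]. split; [split; [apply w_ge| apply phase2inv]; auto; lra|].
    pose proof (w_pos t1 ltac:(lra)).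
    split.
    { unfold aa. pose proof (G_s_le t1 ltac:(lra)).
      destruct (G_bounds (s t1) (s_pos t1 ltac:(lra))) as [_ [Hg _]].
      pose proof (pow2_ge_0 (s t1)). split; nra. }
    split; unfold aa; field; lra. }
  assert (Hup : w t - aa t - Bar t <= 0).
  { apply (crossing_closed (fun t => w t - aa t - Bar t) tau T); auto; try lra.
    - apply cc_minus; auto.
    - pose proof (Rle_abs (w tau - aa tau)). lra.
    - intros t1 Ht1 Hz Hlt.
      destruct (Hfacts t1 Ht1) as [Ht1' [Hwb [Hab [Hd1 Hd2]]]].
      assert (HB : - (Bar t1 - CC * lam ^ 2) / th <= (lam * G (s t1) / w t1 - 1) + lam * LG * (lam * G (s t1) / w t1)).
      { apply (left_compare (fun t => w t + lam * LG * s t) Bar t1).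
        - apply is_derive_Rplus; [apply w_der; auto| apply is_derive_scal, s_der; auto].
        - apply HbarD.
        - exists (t1 - tau); split; [lra|]. intros h Hh.
          pose proof (Hlt (t1 - h) ltac:(lra)).
          pose proof (aa_lip t1 (t1 - h) ltac:(lra) ltac:(lra)) as Hlip.
          pose proof (s_mono (t1 - h) t1 ltac:(lra) ltac:(lra) ltac:(lra)).
          rewrite (Rabs_right (s t1 - s (t1 - h))) in Hlip by lra. apply Rabs_le_between in Hlip. nra. }
      rewrite Hd1, Hd2 in HB.
      assert (Hwa : aa t1 - w t1 = - Bar t1) by lra.
      rewrite Hwa in HB.
      apply (alg_up (cst * lam) (w t1) (lam * LG * (aa t1 / w t1)) (Bar t1) (CC * lam ^ 2)
               (lam * LG * cst / b0)); auto.
      + split; [nra| lra].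
      + pose proof (HBar t1). nra.
      + pose proof (HBar t1). lra.
      + unfold th in HB. replace (8 * (cst * lam)) with (8 * cst * lam) by ring. unfold Rdiv in *. lra.
      + replace (lam * LG * cst / b0) with (lam * LG * (cst * lam / (b0 * lam))) by (field; lra).
        apply Rmult_le_compat_l; [nra|].
        unfold Rdiv. apply Rmult_le_compat; try lra.
        * apply Rlt_le, Rinv_0_lt_compat; nra.
        * apply Rinv_le_contravar; nra.
      + apply K_lt. }
  assert (Hlo : - (w t - aa t) - Bar t <= 0).
  { apply (crossing_closed (fun t => - (w t - aa t) - Bar t) tau T); auto; try lra.
    - apply cc_minus; auto. apply (cc_ext (fun t => -1 * (w t - aa t))); [intros; ring| apply cc_scal; auto].
    - pose proof (Rle_abs (- (w tau - aa tau))). rewrite Rabs_Ropp in H5. lra.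
    - intros t1 Ht1 Hz Hlt.
      destruct (Hfacts t1 Ht1) as [Ht1' [Hwb [Hab [Hd1 Hd2]]]].
      assert (HB : (lam * G (s t1) / w t1 - 1) + - (Bar t1 - CC * lam ^ 2) / th <= lam * LG * (lam * G (s t1) / w t1)).
      { apply (left_compare (fun t => lam * LG * s t) (fun t => w t + Bar t) t1).
        - apply is_derive_scal, s_der; auto.
        - apply is_derive_Rplus; [apply w_der; auto| apply HbarD].
        - exists (t1 - tau); split; [lra|]. intros h Hh.
          pose proof (Hlt (t1 - h) ltac:(lra)).
          pose proof (aa_lip t1 (t1 - h) ltac:(lra) ltac:(lra)) as Hlip.
          pose proof (s_mono (t1 - h) t1 ltac:(lra) ltac:(lra) ltac:(lra)).
          rewrite (Rabs_right (s t1 - s (t1 - h))) in Hlip by lra. apply Rabs_le_between in Hlip. nra. }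
      rewrite Hd1, Hd2 in HB.
      assert (Hwa : aa t1 - w t1 = Bar t1) by lra.
      rewrite Hwa in HB.
      apply (alg_lo (cst * lam) (w t1) (Bar t1) (CC * lam ^ 2) (lam * LG * cst / b0)); auto.
      + split; [nra| lra].
      + pose proof (HBar t1). nra.
      + pose proof (HBar t1). lra.
      + apply Rle_trans with (lam * LG * (aa t1 / w t1)).
        * unfold th in HB. replace (8 * (cst * lam)) with (8 * cst * lam) by ring. unfold Rdiv in *. lra.
        * replace (lam * LG * cst / b0) with (lam * LG * (cst * lam / (b0 * lam))) by (field; lra).
          apply Rmult_le_compat_l; [nra|].
          unfold Rdiv. apply Rmult_le_compat; try lra.
          -- apply Rlt_le, Rinv_0_lt_compat; nra.
          -- apply Rinv_le_contravar; nra.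
      + apply K_lt. }
  apply Rabs_le. lra.
Qed.

Definition d1c := 3 + 3 * cst * y0 + 8 * cst * Rabs (ln (6 * cst / CC)) + 11 * cst.
Definition d2c := 9 * (W + cst) + 2 * CC + 4 * cst * LG.

Lemma d1c_pos : 0 <= d1c.
Proof.
  unfold d1c. pose proof cst_pos. pose proof y0_pos. pose proof (Rabs_pos (ln (6 * cst / CC))).
  assert (0 <= cst * y0) by nra. assert (0 <= cst * Rabs (ln (6 * cst / CC))) by nra. lra.
Qed.

Lemma G_t_le t : y0 <= t <= T -> 0 < G t <= cst.
Proof.
  intros Ht. pose proof y0_pos. pose proof NN_ge1. pose proof W_pos.
  destruct (G_bounds t ltac:(lra)) as [_ [Ga Gb]].
  assert (0 < t ^ 2) by (apply pow_lt; lra). split; [lra|].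
  unfold cst. apply Rle_trans with (1 := Gb). apply Rmult_le_compat_l; [lra|]. apply pow_incr. unfold SS; lra.
Qed.

Lemma final_large : / 3 < lam -> forall t, y0 <= t <= T -> Rabs (w t - lam / E t) <= d2c * lam ^ 2.
Proof.
  intros H3 t Ht. pose proof y0_pos. pose proof (G_t_le t Ht). pose proof CC_pos. pose proof LG_pos.
  pose proof cst_pos. pose proof W_pos.
  assert (Hw1 : 0 < w t <= W) by (split; [apply w_pos| apply w_le_W]; lra).
  change (lam / E t) with (lam * G t).
  assert (0 < lam * G t <= cst) by (split; nra).
  assert (Rabs (w t - lam * G t) <= W + cst) by (apply Rabs_le; lra).
  assert (1 < 9 * lam ^ 2) by nra.
  unfold d2c. assert (0 <= cst * LG) by nra.
  apply Rle_trans with (W + cst); auto.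
  assert (W + cst <= 9 * (W + cst) * lam ^ 2) by nra.
  assert (0 <= (2 * CC + 4 * cst * LG) * lam ^ 2) by (apply Rmult_le_pos; [nra| apply pow2_ge_0]).
  nra.
Qed.

Lemma final_small : lam <= / 3 -> forall t, y0 + d1c * lam * ln (/ lam) <= t <= T ->
  Rabs (w t - lam / E t) <= d2c * lam ^ 2.
Proof.
  intros H3 t Ht. pose proof y0_pos. pose proof CC_pos. pose proof LG_pos.
  pose proof cst_pos. pose proof W_pos. pose proof NN_ge1.
  set (L := ln (/ lam)). change (ln (/ lam)) with L in Ht.
  assert (HL : 1 <= L).
  { unfold L. rewrite <- (ln_exp 1). apply ln_le'; [apply exp_pos|].
    pose proof exp_le_3. apply Rle_trans with 3; auto.
    apply Rmult_le_reg_l with lam; [lra|]. rewrite Rinv_r by lra. lra. }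
  assert (HlnL : ln lam = - L) by (unfold L; rewrite ln_Rinv by lra; ring).
  set (Ab := Rabs (ln (6 * cst / CC))).
  assert (HX : ln (AA / (CC * lam ^ 2)) = ln (6 * cst / CC) + L).
  { unfold L, AA. replace (6 * cst * lam / (CC * lam ^ 2)) with (6 * cst / CC * / lam) by (field; lra).
    apply ln_mult; [apply Rdiv_lt_0_compat; lra| apply Rinv_0_lt_compat; lra]. }
  assert (Hln1 : ln (y0 + lam) <= y0) by (pose proof (ln_le_xm1 (y0 + lam) ltac:(lra)); lra).
  assert (Htau : tau - y0 <= 3 * lam + 3 * cst * lam * y0 + 3 * cst * lam * L).
  { unfold tau, P1. rewrite HlnL. assert (0 < cst * lam) by nra. nra. }
  assert (Hab : ln (6 * cst / CC) <= Ab) by apply Rle_abs.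
  assert (Hab0 : 0 <= Ab) by apply Rabs_pos.
  assert (Hsum : tau - y0 + 8 * cst * lam * (Ab + L) <= d1c * lam * L).
  { unfold d1c. fold Ab. assert (0 < cst * lam) by nra.
    assert (lam <= lam * L) by nra.
    assert (cst * lam * y0 <= cst * lam * y0 * L) by (assert (0 <= cst * lam * y0) by nra; nra).
    assert (cst * lam * Ab <= cst * lam * Ab * L) by (assert (0 <= cst * lam * Ab) by nra; nra).
    lra. }
  assert (HtauT : tau <= T) by (assert (0 <= 8 * cst * lam * (Ab + L)) by (apply Rmult_le_pos; nra); lra).
  assert (Httau : tau <= t) by (assert (0 <= 8 * cst * lam * (Ab + L)) by (apply Rmult_le_pos; nra); lra).
  assert (Hgap : th * ln (AA / (CC * lam ^ 2)) <= t - tau).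
  { rewrite HX. unfold th. assert (0 < cst * lam) by nra. nra. }
  pose proof (relax HtauT t ltac:(lra)) as Hr.
  assert (HBar : Bar t <= 2 * CC * lam ^ 2).
  { unfold Bar. assert (Hth : 0 < th) by (unfold th; nra).
    assert (HXp : 0 < AA / (CC * lam ^ 2)).
    { unfold AA. apply Rdiv_lt_0_compat; [nra| apply Rmult_lt_0_compat; [lra| apply pow_lt; lra]]. }
    assert (exp (- (t - tau) / th) <= exp (- ln (AA / (CC * lam ^ 2)))).
    { apply exp_le. apply Rmult_le_reg_r with th; auto. unfold Rdiv. rewrite Rmult_assoc, Rinv_l by lra. nra. }
    rewrite exp_Ropp, exp_ln in H6 by auto.
    rewrite Rinv_div in H6.
    assert (0 < AA) by (unfold AA; nra).
    assert (AA * exp (- (t - tau) / th) <= AA * (CC * lam ^ 2 / AA)) by (apply Rmult_le_compat_l; lra).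
    replace (AA * (CC * lam ^ 2 / AA)) with (CC * lam ^ 2) in H8 by (field; lra). lra. }
  assert (Hyt : y0 <= tau) by (unfold tau; pose proof P1_pos; lra).
  assert (Hw4 : 0 < w t <= 4 * cst * lam) by (split; [apply w_pos| apply phase2inv]; lra).
  assert (Hg : Rabs (aa t - lam * G t) <= lam * LG * (4 * cst * lam)).
  { unfold aa. replace (lam * G (s t) - lam * G t) with (lam * (G (s t) - G t)) by ring.
    rewrite Rabs_mult, Rabs_right by lra. rewrite Rmult_assoc. apply Rmult_le_compat_l; [lra|].
    eapply Rle_trans; [apply (G_lip SS)|].
    - split; [apply s_pos; lra| apply s_le; lra].
    - split; [lra| unfold SS; lra].
    - unfold LG. replace (s t - t) with (w t) by (unfold s; ring). rewrite Rabs_right by lra.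
      assert (0 < SS) by (unfold SS; lra). apply Rmult_le_compat_l; [nra| lra]. }
  change (lam / E t) with (lam * G t).
  replace (w t - lam * G t) with ((w t - aa t) + (aa t - lam * G t)) by ring.
  eapply Rle_trans; [apply Rabs_triang|].
  unfold d2c. assert (0 <= 9 * (W + cst) * lam ^ 2) by (apply Rmult_le_pos; [nra| apply pow2_ge_0]).
  replace (lam * LG * (4 * cst * lam)) with (4 * cst * LG * lam ^ 2) in Hg by ring.
  nra.
Qed.

End ODE.

Theorem lemma16 (v : List.list R) (T : R) (E : R -> R)
  (Hv : in_Nstar v) (Hv0 : Nstar_nonzero v) (HT : 0 < T)
  (HE : is_critical_core v E) :
  exists d1 d2 : R,
    forall lam : R, 0 < lam <= 1 ->
    forall w : R -> R, is_wstar_solution v E lam T w ->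
    forall t : R, / m1 v + d1 * lam * ln (/ lam) <= t <= T ->
      Rabs (w t - lam / E t) <= d2 * lam ^ 2.
Proof.
  exists (d1c v T), (d2c v T). intros lam Hl w Hw t Ht.
  destruct (Rle_lt_dec lam (/ 3)) as [Hs|Hb].
  - apply (final_small v E T lam w); auto.
  - apply (final_large v E T lam w); auto. split; [|lra].
    assert (0 <= d1c v T) by (eapply d1c_pos; eauto).
    assert (0 <= ln (/ lam)).
    { rewrite <- ln_1. apply ln_le'; [lra|]. apply Rmult_le_reg_l with lam; [lra|].
      rewrite Rinv_r by lra. lra. }
    assert (0 <= d1c v T * lam * ln (/ lam)) by (apply Rmult_le_pos; [nra| auto]).
    unfold y0. lra.
Qed.
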